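(* For unit activation costs, in every game under the coordination mechanism described in the context, for every optimal assignment $s^*$ there exists a payment vector $\xi$ such that $(s^*,\xi)$ is a Nash equilibrium.
   Context: Unit activation costs means $c(0)=0$ and $c(l)=1$ for every integer $l>0$. A game consists of the cost function $c$, slots $t=1,\dots,T$, and a set of jobs, each job $j$ having integer release time $r_j$ and deadline $d_j$ with $0<r_j<d_j<T$. An assignment $s$ gives each job a slot $s_j$ with $r_j\le s_j<d_j$; the load is $l_t(s)=|\{j:s_j=t\}|$ and $C(s)=\sum_{t=1}^T c(l_t(s))$; an optimal assignment minimizes $C$. In the coordination mechanism, each job $j$ chooses a pair $(s_j,\xi_j)$ with $s_j\in[r_j,d_j)$ and payment $\xi_j\ge0$. Slot $t$ is opened iff $\sum_{j:s_j=t}\xi_j\ge c(l_t(s))$; a job whose slot is not opened has infinite cost, otherwise its cost is $\xi_j$. A profile $(s,\xi)$ is a Nash equilibrium if for every job $j$: (i) $\sum_{j':s_{j'}=s_j}\xi_{j'}\ge c(l_{s_j}(s))$; (ii) for every $t\in[r_j,d_j)\setminus\{s_j\}$, $\xi_j\le\max\{0,\,c(l_t(s)+1)-\sum_{j':s_{j'}=t}\xi_{j'}\}$; (iii) $\xi_j\le\max\{0,\,c(l_{s_j}(s))-\sum_{j':s_{j'}=s_j,\,j'\ne j}\xi_{j'}\}$. *)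

(* Defs.v *)
From mathcomp Require Import all_boot all_order all_algebra.
Set Implicit Arguments. Unset Strict Implicit. Unset Printing Implicit Defensive.
Import Order.TTheory GRing.Theory Num.Theory.
Local Open Scope ring_scope.

Definition unit_cost (R : realFieldType) (l : nat) : R :=
  if l == 0%N then 0 else 1.

Section Game.
Variables (R : realFieldType) (c : nat -> R) (n : nat).
(* jobs are 'I_n ; r j, d j : release times and deadlines; T : number of slots *)
Variables (T : nat) (r d : 'I_n -> nat).

Definition feasible (s : 'I_n -> nat) : Prop :=
  forall j, (r j <= s j < d j)%N.

Definition load (s : 'I_n -> nat) (t : nat) : nat := #|[set j | s j == t]|.

Definition total_cost (s : 'I_n -> nat) : R :=
  \sum_(1 <= t < T.+1) c (load s t).

Definition optimal (s : 'I_n -> nat) : Prop :=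
  feasible s /\ forall s', feasible s' -> total_cost s <= total_cost s'.

Definition pay_at (s : 'I_n -> nat) (xi : 'I_n -> R) (t : nat) : R :=
  \sum_(j' | s j' == t) xi j'.

Definition nash (s : 'I_n -> nat) (xi : 'I_n -> R) : Prop :=
  feasible s /\ (forall j, 0 <= xi j) /\
  forall j,
    [/\ pay_at s xi (s j) >= c (load s (s j)),
        (forall t, (r j <= t < d j)%N -> t != s j ->
           xi j <= Num.max 0 (c (load s t).+1 - pay_at s xi t))
      & xi j <= Num.max 0 (c (load s (s j)) -
                           \sum_(j' | (s j' == s j) && (j' != j)) xi j')].
End Game.

(* Main.v *)
Require Import Defs.
From mathcomp Require Import all_boot all_order all_algebra zify.
Import Order.TTheory GRing.Theory Num.Theory.
Local Open Scope ring_scope.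

Lemma load_pos n (s : 'I_n -> nat) t : (0 < load s t)%N <-> exists j, s j = t.
Proof.
rewrite /load card_gt0; split.
  by case/set0Pn=> j; rewrite inE => /eqP; exists j.
by case=> j hj; apply/set0Pn; exists j; rewrite inE hj.
Qed.
Arguments load_pos {n s t}.

Lemma sum_lt (R : realFieldType) (f g : nat -> R) a b t0 :
  (forall t, (a <= t < b)%N -> f t <= g t) -> (a <= t0 < b)%N -> f t0 < g t0 ->
  \sum_(a <= t < b) f t < \sum_(a <= t < b) g t.
Proof.
move=> hle /andP[h1 h2] hlt.
rewrite !(@big_cat_nat _ _ _ t0 a b _ _ h1 (ltnW h2)) /= !(big_ltn h2).
apply: ler_ltD.
  apply: ler_sum_nat => i /andP[hi1 hi2]; apply: hle.
  by rewrite hi1 (leq_trans hi2 (ltnW h2)).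
apply: ltr_leD => //; apply: ler_sum_nat => i /andP[hi1 hi2]; apply: hle.
by rewrite hi2 andbT (leq_trans h1 (ltnW hi1)).
Qed.

Section Key.
Variables (R : realFieldType) (n T : nat) (r d : 'I_n -> nat).
Hypotheses (hr : forall j, (0 < r j)%N) (hrd : forall j, (r j < d j)%N)
  (hdT : forall j, (d j < T)%N).
Variable s : 'I_n -> nat.

Definition good j := [forall t : 'I_T,
  ((r j <= t < d j)%N && (val t != s j)) ==> (load s t == 0)%N].

Lemma exists_good : optimal (@unit_cost R) T r d s ->
  forall j, exists j', s j' = s j /\ good j'.
Proof.
move=> [fs opt] j.
case: (boolP [exists j', (s j' == s j) && good j']).
  by case/existsP=> j' /andP[/eqP h1 h2]; exists j'.
rewrite negb_exists => /forallP H.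
set t0 := s j.
pose pt k := [pick t : 'I_T | (r k <= t < d k)%N && (val t != s k) && (load s t != 0)%N].
pose s' k := if s k == t0 then (if pt k is Some t then val t else s k) else s k.
have hpt : forall k, s k = t0 -> exists t, pt k = Some t.
  move=> k hk; have := H k; rewrite hk eqxx /= => /forallPn[t].
  rewrite negb_imply => ht; rewrite /pt; case: pickP => [t' _|/(_ t)]; first by exists t'.
  by move=> hf; move: ht; rewrite hf.
have fs' : feasible r d s'.
  move=> k; rewrite /s'; case: ifP => _; last exact: fs.
  rewrite /pt; case: pickP => [t /andP[/andP[]]|_] //; exact: fs.
have hs'1 : forall k, s' k != t0.
  move=> k; rewrite /s'; case: ifP => [/eqP hk|/negbT //].
  have [t ht] := hpt k hk; rewrite ht; move: ht; rewrite /pt; case: pickP => // t1.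
  by case/andP=> /andP[_ h] _ [<-]; rewrite -hk.
have hs'2 : forall k, exists k', s k' = s' k.
  move=> k; rewrite /s'; case: ifP => [/eqP hk|_]; last by exists k.
  rewrite /pt; case: pickP => [t /andP[_]|_]; last by exists k.
  by rewrite -lt0n => /load_pos.
exfalso; have := opt s' fs'; rewrite leNgt => /negP; apply.
apply: (@sum_lt R _ _ _ _ t0).
- move=> t _; rewrite /unit_cost; case: ifP => [_|/negbT]; first by case: ifP.
  rewrite -lt0n => /load_pos[k hk].
  have [k' hk'] := hs'2 k.
  have : (0 < load s t)%N by apply/load_pos; exists k'; rewrite hk'.
  by rewrite lt0n => /negbTE ->.
- have := fs j; have := hr j; have := hdT j; rewrite /t0; lia.
- rewrite /unit_cost.
  have -> : (load s' t0 == 0)%N.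
    rewrite -leqn0 leqNgt; apply/negP => /load_pos[k hk].
    by have := hs'1 k; rewrite hk eqxx.
  have : (0 < load s t0)%N by apply/load_pos; exists j.
  by rewrite lt0n => /negbTE ->; rewrite ltr01.
Qed.
End Key.

Theorem theorem4 (R : realFieldType) (n T : nat) (r d : 'I_n -> nat)
  (hr : forall j, (0 < r j)%N) (hrd : forall j, (r j < d j)%N)
  (hdT : forall j, (d j < T)%N)
  (sstar : 'I_n -> nat) :
  optimal (@unit_cost R) T r d sstar ->
  exists xi : 'I_n -> R, nash (@unit_cost R) r d sstar xi.
Proof.
move=> hopt.
have hg := @exists_good R n T r d hr hdT sstar hopt.
pose pk t := [pick j' | (sstar j' == t) && good n T r d sstar j'].
pose xi j : R := if pk (sstar j) is Some j0 then (j == j0)%:R else 0.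
have hpk : forall j, exists2 j0, pk (sstar j) = Some j0 &
    sstar j0 = sstar j /\ good n T r d sstar j0.
  move=> j; have [j' [h1 h2]] := hg j; rewrite /pk; case: pickP.
    by move=> j0 /andP[/eqP ? ?]; exists j0.
  by move/(_ j'); rewrite h1 eqxx h2.
have xiE : forall j j', sstar j' = sstar j -> xi j' =
    if pk (sstar j) is Some j0 then (j' == j0)%:R else 0.
  by move=> j j' h; rewrite /xi h.
have pay0 : forall t, load sstar t = 0%N -> pay_at sstar xi t = 0.
  move=> t h; rewrite /pay_at big1 // => k /eqP hk.
  have : (0 < load sstar t)%N by apply/load_pos; exists k.
  by rewrite h.
exists xi; split; first by case: hopt.
split; first by move=> j; rewrite /xi; case: (pk _) => // ?; rewrite ler0n.
move=> j; have [j0 hj0 [h1 h2]] := hpk j.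
have hl : unit_cost R (load sstar (sstar j)) = 1.
  rewrite /unit_cost; have : (0 < load sstar (sstar j))%N by apply/load_pos; exists j.
  by rewrite lt0n => /negbTE ->.
split.
- rewrite hl /pay_at (eq_bigr (fun j' => (j' == j0)%:R : R)); last first.
    by move=> k /eqP hk; rewrite (xiE j k hk) hj0.
  rewrite (bigD1 j0) ?h1 //= eqxx big1 ?addr0 //.
  by move=> k /andP[_ /negbTE ->].
- move=> t ht htne; rewrite /xi hj0; case: eqP => [hjj|_]; last first.
    by rewrite le_max lexx.
  subst j0.
  move: h2 => /forallP /(_ (Ordinal (leq_trans (proj2 (andP ht)) (ltnW (hdT j))))).
  rewrite /= ht htne /= => /eqP hl0.
  by rewrite hl0 pay0 // /unit_cost /= subr0 le_max lexx orbT.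
- rewrite hl /xi hj0; case: eqP => [hjj|_]; last by rewrite le_max lexx.
  subst j0; rewrite big1 ?subr0 ?le_max ?lexx ?orbT //.
  move=> k /andP[/eqP hk hne]; move: hj0; rewrite -hk => ->.
  by rewrite (negbTE hne).
Qed.
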